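(* Let $G$ be a nice graph with no two adjacent vertices of the same degree. If $G$ has an interval coloring, then $\chi'_{qm\Sigma}(G)=2$.
   Context: All graphs are simple and finite. A $k$-edge-coloring of $G$ is any map $c:E(G)\to\{1,\dots,k\}$. An interval coloring of $G$ is a $k$-edge-coloring (for some $k$) in which the colors of the edges incident to each vertex are pairwise distinct and form an interval of consecutive integers. A $k$-edge-coloring $c$ induces $\sigma_c(v)=\sum_{u\in N(v)}c(vu)$; it is neighbor sum distinguishing (NSD) if $\sigma_c(u)\ne\sigma_c(v)$ for every edge $uv$, and quasi-majority if every vertex $v$ is incident to at most $\lceil d(v)/2\rceil$ edges of each single color. $\chi'_{qm\Sigma}(G)$ denotes the least $k$ such that $G$ has a $k$-edge-coloring that is both quasi-majority and NSD. A graph is nice if it has no connected component isomorphic to $K_2$. *)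

(* Defs.v *)
From mathcomp Require Import all_boot.
Set Implicit Arguments. Unset Strict Implicit. Unset Printing Implicit Defensive.

Section Graphs.
Variable T : finType.

Definition simple_graph (e : rel T) : Prop := symmetric e /\ irreflexive e.

Definition edges (e : rel T) : {set {set T}} :=
  [set [set x; y] | x in T, y in T & e x y].

Definition nbhd (e : rel T) (v : T) : {set T} := [set u | e v u].
Definition deg (e : rel T) (v : T) : nat := #|nbhd e v|.

Definition is_k_edge_coloring (e : rel T) (k : nat) (c : {set T} -> nat) : Prop :=
  forall E, E \in edges e -> 1 <= c E <= k.

(* colors at v are pairwise distinct and form an interval of consecutive integers *)
Definition is_interval_coloring (e : rel T) (c : {set T} -> nat) : Prop :=
  (exists k, is_k_edge_coloring e k c) /\
  forall v, exists a,
    perm_eq [seq c [set v; u] | u <- enum (nbhd e v)] (iota a (deg e v)).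

Definition has_interval_coloring (e : rel T) : Prop :=
  exists c, is_interval_coloring e c.

Definition sigma (e : rel T) (c : {set T} -> nat) (v : T) : nat :=
  \sum_(u in nbhd e v) c [set v; u].

Definition nsd (e : rel T) (c : {set T} -> nat) : Prop :=
  forall u v, e u v -> sigma e c u <> sigma e c v.

Definition quasi_majority (e : rel T) (c : {set T} -> nat) : Prop :=
  forall v i, #|[set u in nbhd e v | c [set v; u] == i]| <= uphalf (deg e v).

Definition qm_nsd_colorable (e : rel T) (k : nat) : Prop :=
  exists c, is_k_edge_coloring e k c /\ quasi_majority e c /\ nsd e c.

Definition chi_qmS_eq (e : rel T) (k : nat) : Prop :=
  qm_nsd_colorable e k /\ forall j, j < k -> ~ qm_nsd_colorable e j.

(* no connected component isomorphic to K_2, i.e. no component consisting of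
   exactly two (necessarily adjacent) vertices *)
Definition nice (e : rel T) : Prop :=
  ~ exists u v, e u v /\ [set w | connect e u w] = [set u; v].

End Graphs.

(* Main.v *)
Require Import Defs.
From mathcomp Require Import all_boot.
From mathcomp Require Import zify.

Definition col (n : nat) : nat := if odd n then 1 else 2.

Lemma sum_odd a d : \sum_(n <- iota a d) (odd n : nat) = if odd a then uphalf d else d./2.
Proof.
elim: d a => [|d IH] a; first by rewrite big_nil; case: (odd a).
rewrite /= big_cons IH /=; case: (odd a) => //=.
Qed.

Lemma sum_even a d : \sum_(n <- iota a d) (~~ odd n : nat) = if odd a then d./2 else uphalf d.
Proof.
elim: d a => [|d IH] a; first by rewrite big_nil; case: (odd a).
rewrite /= big_cons IH /=; case: (odd a) => //=.
Qed.

Lemma sum_col a d : \sum_(n <- iota a d) col n = if odd a then d + d./2 else d + uphalf d.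
Proof.
elim: d a => [|d IH] a; first by rewrite big_nil; case: (odd a).
rewrite /= big_cons IH /= /col; case: (odd a) => /=; lia.
Qed.

Lemma cnt_col a d i : \sum_(n <- iota a d) (col n == i : nat) <= uphalf d.
Proof.
have h1 := uphalf_half d; have h2 := odd_double_half d.
have [->|ne1] := eqVneq i 1.
  rewrite (eq_bigr (fun n => (odd n : nat))); last by move=> n _; rewrite /col; case: (odd n).
  rewrite sum_odd; case: (odd a); lia.
have [->|ne2] := eqVneq i 2.
  rewrite (eq_bigr (fun n => (~~ odd n : nat))); last by move=> n _; rewrite /col; case: (odd n).
  rewrite sum_even; case: (odd a); lia.
rewrite big1 // => n _; rewrite /col; case: (odd n).
  by rewrite eq_sym (negbTE ne1).
by rewrite eq_sym (negbTE ne2).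
Qed.

Theorem mainTheorem17 (T : finType) (e : rel T) :
  simple_graph e ->
  (exists u v, e u v) ->
  nice e ->
  (forall u v, e u v -> deg e u <> deg e v) ->
  has_interval_coloring e ->
  chi_qmS_eq e 2.
Proof.
move=> [esym eirr] [u0 [v0 huv]] _ hdeg [c [_ hc]].
split.
  exists (fun E => col (c E)); split; first by move=> E _; rewrite /col; case: (odd _).
  have key : forall v (F : nat -> nat), \sum_(u in nbhd e v) F (c [set v; u]) =
      \sum_(n <- iota (xchoose (hc v)) (deg e v)) F n.
    move=> v F; rewrite -big_enum -(big_map (fun u => c [set v; u]) xpredT).
    by apply: perm_big; exact: (xchooseP (hc v)).
  split.
    move=> v i; rewrite -sum1_card.
    rewrite (eq_bigl (fun u => (u \in nbhd e v) && (col (c [set v; u]) == i))); last first.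
      by move=> u; rewrite inE.
    rewrite big_mkcondr /=.
    rewrite (eq_bigr (fun u => (col (c [set v; u]) == i : nat))); last first.
      by move=> u _; case: (_ == _).
    rewrite (key v (fun n => (col n == i : nat))); exact: cnt_col.
  move=> u v huv'; rewrite /sigma (key u col) (key v col) !sum_col.
  have := hdeg u v huv'.
  have h1 := uphalf_half (deg e u); have h2 := odd_double_half (deg e u).
  have h3 := uphalf_half (deg e v); have h4 := odd_double_half (deg e v).
  case: (odd (xchoose (hc u))); case: (odd (xchoose (hc v))); lia.
move=> j hj [c' [hk [hqm _]]].
have hE : [set u0; v0] \in edges e by apply/imset2P; exists u0 v0; rewrite ?inE.
have hj1 : j = 1 by have := hk _ hE; lia.
subst j.
have hd : forall w x, e w x -> 0 < deg e w.
  by move=> w x hwx; apply/card_gt0P; exists x; rewrite inE.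
have [w hw] : exists w, 1 < deg e w.
  have h0 := hd _ _ huv; have h1 := hd _ _ (etrans (esym v0 u0) huv).
  have := hdeg _ _ huv.
  case: (ltnP 1 (deg e u0)) => [hu|hu]; first by exists u0.
  case: (ltnP 1 (deg e v0)) => [hv|hv]; first by exists v0.
  lia.
have := hqm w 1.
have -> : [set u in nbhd e w | c' [set w; u] == 1] = nbhd e w.
  apply/setP => u; rewrite !inE; case hwu: (e w u) => //=.
  have hE' : [set w; u] \in edges e by apply/imset2P; exists w u; rewrite ?inE.
  have := hk _ hE'; move=> /andP [a b]; apply/eqP; lia.
rewrite /deg in hw *.
have h1 := uphalf_half #|nbhd e w|; have h2 := odd_double_half #|nbhd e w|.
lia.
Qed.
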